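(* Assume $a_j\neq0$ for $1\le j\le4$, $v_{12}^2+a_2a_4\neq0$ and $v_{22}^2+a_3a_4\neq0$. Then: (i) $V(\mathbf v,d)\cap H_0$ consists of three distinct points $[0,1,0]$, $[0,r_1,R_1]$, $[0,r_2,R_2]$, where $r_j\neq0$, $R_j\neq0$ and $a_4R_j^2-2v_{12}r_jR_j-a_2r_j^2=0$ for $j=1,2$; (ii) $V(\mathbf v,d)\cap H_1$ consists of three distinct points $[1,0,0]$, $[s_1,0,S_1]$, $[s_2,0,S_2]$, where $s_j\neq0$, $S_j\neq0$ and $a_4S_j^2+2v_{22}s_jS_j-a_3s_j^2=0$ for $j=1,2$; (iii) $V(\mathbf v,d)\cap H_2$ consists only of the two points $[1,0,0]$, $[0,1,0]$; (iv) the four points $[0,r_j,R_j]$, $[s_j,0,S_j]$ ($j=1,2$) are smooth points of $V(\mathbf v,d)$.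
   Context: Parameters $[\mathbf v,d]=[v_{11},v_{12},v_{21},v_{22},d]\in\mathbb{C}P^4$ (complex, not all zero); $a_1=v_{11}-v_{21}-d$, $a_2=-v_{11}-v_{21}+d$, $a_3=v_{11}+v_{21}+d$, $a_4=-v_{11}+v_{21}-d$. On $\mathbb{C}P^2$ with coordinates $[u_0,u_1,u_2]$, $V(\mathbf v,d)$ is the curve $P=0$ where $P=a_4u_2^4+2(v_{22}u_0-v_{12}u_1)u_2^3-(a_3u_0^2+a_2u_1^2)u_2^2+2u_0u_1(v_{22}u_1-v_{12}u_0)u_2+a_1u_0^2u_1^2$, and $H_j=\{[u_0,u_1,u_2]:u_j=0\}$ are the coordinate lines. A point of $V$ is smooth if not all partial derivatives of $P$ vanish there. *)

(* Defs.v *)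
From HB Require Import structures.
From mathcomp Require Import all_boot all_order all_algebra.
From mathcomp Require Import mpoly.
From mathcomp Require Import complex.
From mathcomp Require Import reals.

Set Implicit Arguments.
Unset Strict Implicit.
Unset Printing Implicit Defensive.

Import Order.TTheory GRing.Theory Num.Theory.
Local Open Scope ring_scope.

Definition i0 : 'I_3 := @Ordinal 3 0 isT.
Definition i1 : 'I_3 := @Ordinal 3 1 isT.
Definition i2 : 'I_3 := @Ordinal 3 2 isT.

Section Curve.
Variable R : realType.
Local Notation C := (R[i]).

Definition a1 (v11 v12 v21 v22 d : C) : C := v11 - v21 - d.
Definition a2 (v11 v12 v21 v22 d : C) : C := - v11 - v21 + d.
Definition a3 (v11 v12 v21 v22 d : C) : C := v11 + v21 + d.
Definition a4 (v11 v12 v21 v22 d : C) : C := - v11 + v21 - d.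

Local Notation u0 := ('X_i0 : {mpoly C[3]}).
Local Notation u1 := ('X_i1 : {mpoly C[3]}).
Local Notation u2 := ('X_i2 : {mpoly C[3]}).

Definition Ppoly (v11 v12 v21 v22 d : C) : {mpoly C[3]} :=
  let A1 := a1 v11 v12 v21 v22 d in
  let A2 := a2 v11 v12 v21 v22 d in
  let A3 := a3 v11 v12 v21 v22 d in
  let A4 := a4 v11 v12 v21 v22 d in
  A4 *: u2 ^+ 4
  + 2%:R *: ((v22 *: u0 - v12 *: u1) * u2 ^+ 3)
  - (A3 *: u0 ^+ 2 + A2 *: u1 ^+ 2) * u2 ^+ 2
  + 2%:R *: (u0 * u1 * (v22 *: u1 - v12 *: u0) * u2)
  + A1 *: (u0 ^+ 2 * u1 ^+ 2).

Definition pt (x y z : C) : 'I_3 -> C :=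
  fun j => if val j == 0%N then x else if val j == 1%N then y else z.

(* a triple represents a point of CP^2 *)
Definition nonzero3 (x : 'I_3 -> C) : Prop := exists j, x j != 0.

(* equality of points of CP^2 : proportional nonzero triples *)
Definition proj_eq (x y : 'I_3 -> C) : Prop :=
  exists2 c : C, c != 0 & forall j, y j = c * x j.

Definition onV (v11 v12 v21 v22 d : C) (x : 'I_3 -> C) : Prop :=
  (Ppoly v11 v12 v21 v22 d).@[x] = 0.

Definition smooth_pt (v11 v12 v21 v22 d : C) (x : 'I_3 -> C) : Prop :=
  exists j : 'I_3, (mderiv j (Ppoly v11 v12 v21 v22 d)).@[x] != 0.

End Curve.

(* Main.v *)
Require Import Defs.
From HB Require Import structures.
From mathcomp Require Import all_boot all_order all_algebra.
From mathcomp Require Import mpoly.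
From mathcomp Require Import complex.
From mathcomp Require Import reals.
Set Implicit Arguments.
Unset Strict Implicit.
Unset Printing Implicit Defensive.
Import Order.TTheory GRing.Theory Num.Theory.
Local Open Scope ring_scope.
From mathcomp Require Import ring.
Section S. Variable R : realType.
Local Notation C := (R[i]).

Section Gen.
Variables (T : lalgType C) (f : T -> C).
Hypothesis fD : {morph f : x y / x + y}.
Hypothesis fN : {morph f : x / - x}.
Hypothesis fM : {morph f : x y / x * y}.
Hypothesis fZ : forall c x, f (c *: x) = c * f x.
Variables (v11 v12 v21 v22 d : C).

Definition E (u0 u1 u2 : T) : T :=
  let A1 := a1 v11 v12 v21 v22 d in
  let A2 := a2 v11 v12 v21 v22 d in
  let A3 := a3 v11 v12 v21 v22 d in
  let A4 := a4 v11 v12 v21 v22 d in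
  A4 *: u2 ^+ 4
  + 2%:R *: ((v22 *: u0 - v12 *: u1) * u2 ^+ 3)
  - (A3 *: u0 ^+ 2 + A2 *: u1 ^+ 2) * u2 ^+ 2
  + 2%:R *: (u0 * u1 * (v22 *: u1 - v12 *: u0) * u2)
  + A1 *: (u0 ^+ 2 * u1 ^+ 2).

Lemma fX (p : T) n : f (p ^+ n.+1) = f p ^+ n.+1.
Proof. elim: n => [|n IH]; first by rewrite !expr1. by rewrite exprS fM IH -exprS. Qed.

Lemma Egen (p0 p1 p2 : T) : f (E p0 p1 p2) =
  a4 v11 v12 v21 v22 d * f p2^+4 + 2 * (v22 * f p0 - v12 * f p1) * f p2^+3
  - (a3 v11 v12 v21 v22 d * f p0^+2 + a2 v11 v12 v21 v22 d * f p1^+2) * f p2^+2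
  + 2 * f p0 * f p1 * (v22 * f p1 - v12 * f p0) * f p2
  + a1 v11 v12 v21 v22 d * f p0^+2 * f p1^+2.
Proof.
rewrite /E.
rewrite !(fD, fN, fZ, fM, fX).
ring.
Qed.

Variable D : T -> T.
Hypothesis DD : {morph D : x y / x + y}.
Hypothesis DN : {morph D : x / - x}.
Hypothesis DM : forall x y, D (x * y) = D x * y + x * D y.
Hypothesis DZ : forall c x, D (c *: x) = c *: D x.

Lemma Dgen (p0 p1 p2 : T) : f (D (E p0 p1 p2)) =
  let x := f p0 in let y := f p1 in let z := f p2 in
  let dx := f (D p0) in let dy := f (D p1) in let dz := f (D p2) in
  let A1 := a1 v11 v12 v21 v22 d in
  let A2 := a2 v11 v12 v21 v22 d in
  let A3 := a3 v11 v12 v21 v22 d in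
  let A4 := a4 v11 v12 v21 v22 d in
  A4 * 4 * z^+3 * dz
  + 2 * (v22 * dx - v12 * dy) * z^+3 + 2 * (v22 * x - v12 * y) * 3 * z^+2 * dz
  - (A3 * 2 * x * dx + A2 * 2 * y * dy) * z^+2 - (A3 * x^+2 + A2 * y^+2) * 2 * z * dz
  + 2 * (dx * y * (v22 * y - v12 * x) * z + x * dy * (v22 * y - v12 * x) * z
         + x * y * (v22 * dy - v12 * dx) * z + x * y * (v22 * y - v12 * x) * dz)
  + A1 * (2 * x * dx * y^+2 + x^+2 * 2 * y * dy).
Proof.
rewrite /E !exprS !expr0 !mulr1.
rewrite !(DD, DN, DZ, DM).
rewrite !(fD, fN, fZ, fM).
rewrite /=.
ring.
Qed.
End Gen.

Lemma PE v11 v12 v21 v22 d : Ppoly v11 v12 v21 v22 d = E v11 v12 v21 v22 d ('X_i0 : {mpoly C[3]}) 'X_i1 'X_i2.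
Proof. reflexivity. Qed.

Lemma mevalXd (v : 'I_3 -> C) (i j : 'I_3) : (mderiv j ('X_i : {mpoly C[3]})).@[v] = (i == j)%:R.
Proof.
rewrite mderivX mevalZ mevalX mnm1E.
case: eqP => [->|_]; last by rewrite mul0r.
rewrite mul1r big1 // => k _.
by rewrite mnmBE !mnm1E subnn expr0.
Qed.

Lemma Pat v11 v12 v21 v22 d (x y z : C) : (Ppoly v11 v12 v21 v22 d).@[pt x y z] =
  a4 v11 v12 v21 v22 d * z^+4 + 2 * (v22 * x - v12 * y) * z^+3
  - (a3 v11 v12 v21 v22 d * x^+2 + a2 v11 v12 v21 v22 d * y^+2) * z^+2
  + 2 * x * y * (v22 * y - v12 * x) * z
  + a1 v11 v12 v21 v22 d * x^+2 * y^+2.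
Proof.
rewrite PE (Egen (f := meval (pt x y z))); last 4 first.
- exact: mevalD.
- exact: mevalN.
- exact: mevalM.
- exact: mevalZ.
by rewrite !mevalXU.
Qed.

Lemma D2at v11 v12 v21 v22 d (x y z : C) : (mderiv i2 (Ppoly v11 v12 v21 v22 d)).@[pt x y z] =
  let A1 := a1 v11 v12 v21 v22 d in
  let A2 := a2 v11 v12 v21 v22 d in
  let A3 := a3 v11 v12 v21 v22 d in
  let A4 := a4 v11 v12 v21 v22 d in
  4 * A4 * z^+3 + 6 * v22 * x * z^+2 - 6 * v12 * y * z^+2 - 2 * A3 * x^+2 * z
  - 2 * A2 * y^+2 * z + 2 * v22 * x * y^+2 - 2 * v12 * x^+2 * y.
Proof.
rewrite PE (@Dgen _ (meval (pt x y z)) (mevalD _) (mevalN _) (mevalM _) (mevalZ _) _ _ _ _ _ (mderiv i2) (mderivD _) (mderivN _) (mderivM _) (mderivZ _)).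
rewrite !mevalXU !mevalXd (_ : pt x y z i0 = x) // (_ : pt x y z i1 = y) // (_ : pt x y z i2 = z) //=.
ring.
Qed.

Lemma quad (A4 b w : C) : A4 != 0 -> b != 0 -> w ^+ 2 + b * A4 != 0 ->
 exists R1 R2 : C, [/\ R1 != 0, R2 != 0, R1 != R2,
   forall y z, A4 * z^+2 - 2 * w * y * z - b * y^+2 = A4 * (z - R1 * y) * (z - R2 * y)
 & forall X, A4 * X^+2 - 2 * w * X - b = 0 -> X != 0 -> 4 * A4 * X^+3 - 6 * w * X^+2 - 2 * b * X != 0].
Proof.
move=> hA hb hK.
have [D hD2] : exists D, D^+2 = w^+2 + b*A4 by exists (sqrtC (w^+2 + b*A4)); rewrite sqrtCK.
have hD : D != 0.
  by apply/eqP => hD0; move: hK; rewrite -hD2 hD0 expr0n eqxx.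
have h2 : (2 : C) != 0 by rewrite pnatr_eq0.
exists ((w + D)/A4), ((w - D)/A4).
have hs : (w+D)/A4 + (w-D)/A4 = 2*w/A4 by field.
have hp : (w+D)/A4 * ((w-D)/A4) = - b / A4.
  rewrite (_ : (w+D)/A4 * ((w-D)/A4) = (w^+2 - D^+2)/A4^+2); last by field.
  rewrite hD2; field; rewrite ?mulf_neq0 ?expf_neq0 //.
have hpn : (w+D)/A4 * ((w-D)/A4) != 0 by rewrite hp mulf_neq0 ?oppr_eq0 ?invr_eq0.
move: (hpn); rewrite mulf_eq0 negb_or => /andP[n1 n2].
split => //.
- apply/eqP => h.
  have e : 2*D/A4 = (w+D)/A4 - (w-D)/A4 by field.
  have : 2 * D / A4 = 0 by rewrite e h subrr.
  by apply/eqP; rewrite !mulf_neq0 ?invr_eq0.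
- move=> y z.
  rewrite (_ : A4 * (z - (w + D) / A4 * y) * (z - (w - D) / A4 * y) =
     A4 * (z^+2 - ((w+D)/A4 + (w-D)/A4) * y * z + ((w+D)/A4 * ((w-D)/A4)) * y^+2)); last by ring.
  rewrite hs hp; field; rewrite ?mulf_neq0 ?expf_neq0 //.
- move=> X hq hR.
  rewrite (_ : 4 * A4 * X^+3 - 6 * w * X^+2 - 2 * b * X = 4 * X * (A4 * X^+2 - 2 * w * X - b) + 2 * X * (w * X + b)); last by ring.
  rewrite hq mulr0 add0r !mulf_neq0 //.
  apply/eqP => hl.
  have : b * (w^+2 + b*A4) = 2 * (w^+2 + b*A4) * (w * X + b) - A4 * (w * X + b)^+2 + w^+2 * (A4 * X^+2 - 2 * w * X - b) by ring.
  rewrite hl hq !mulr0 expr0n /= mulr0 !subr0 addr0 => /eqP.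
  by rewrite mulf_eq0 (negbTE hb) (negbTE hK).
Qed.

Lemma ord3 (j : 'I_3) : [\/ j = i0, j = i1 | j = i2].
Proof.
case: j => [[|[|[|k]]] Hk]; [apply: Or31|apply: Or32|apply: Or33|by []]; exact: val_inj.
Qed.

Lemma projE (a b c : C) (x : 'I_3 -> C) : proj_eq (pt a b c) x <->
  exists2 k, k != 0 & [/\ x i0 = k * a, x i1 = k * b & x i2 = k * c].
Proof.
split.
  by case=> k hk e; exists k => //; rewrite !e.
case=> k hk [e0 e1 e2]; exists k => // j.
by case: (ord3 j) => ->.
Qed.

Lemma nz3E (x : 'I_3 -> C) : nonzero3 x -> [\/ x i0 != 0, x i1 != 0 | x i2 != 0].
Proof. by case=> j; case: (ord3 j) => -> h; [apply: Or31|apply: Or32|apply: Or33]. Qed.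

Lemma onVE v11 v12 v21 v22 d (x : 'I_3 -> C) : onV v11 v12 v21 v22 d x <->
  a4 v11 v12 v21 v22 d * x i2^+4 + 2 * (v22 * x i0 - v12 * x i1) * x i2^+3
  - (a3 v11 v12 v21 v22 d * x i0^+2 + a2 v11 v12 v21 v22 d * x i1^+2) * x i2^+2
  + 2 * x i0 * x i1 * (v22 * x i1 - v12 * x i0) * x i2
  + a1 v11 v12 v21 v22 d * x i0^+2 * x i1^+2 = 0.
Proof.
rewrite /onV (@meval_eq _ _ x (pt (x i0) (x i1) (x i2))) ?Pat //.
by move=> j; case: (ord3 j) => ->.
Qed.

Lemma smooth2 v11 v12 v21 v22 d (x y z : C) :
  (mderiv i2 (Ppoly v11 v12 v21 v22 d)).@[pt x y z] != 0 -> smooth_pt v11 v12 v21 v22 d (pt x y z).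
Proof. by move=> h; exists i2. Qed.

End S.

Theorem lemma6p4 (R : realType) (v11 v12 v21 v22 d : R[i]) :
  let A1 := a1 v11 v12 v21 v22 d in
  let A2 := a2 v11 v12 v21 v22 d in
  let A3 := a3 v11 v12 v21 v22 d in
  let A4 := a4 v11 v12 v21 v22 d in
  let V := onV v11 v12 v21 v22 d in
  A1 != 0 -> A2 != 0 -> A3 != 0 -> A4 != 0 ->
  v12 ^+ 2 + A2 * A4 != 0 -> v22 ^+ 2 + A3 * A4 != 0 ->
  exists r1 R1 r2 R2 s1 S1 s2 S2 : R[i],
  [/\
   (* (i) V ∩ H_0 *)
   [/\ [/\ r1 != 0, R1 != 0, r2 != 0 & R2 != 0],
       A4 * R1 ^+ 2 - 2%:R * v12 * r1 * R1 - A2 * r1 ^+ 2 = 0,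
       A4 * R2 ^+ 2 - 2%:R * v12 * r2 * R2 - A2 * r2 ^+ 2 = 0,
       [/\ ~ proj_eq (pt 0 1 0) (pt 0 r1 R1), ~ proj_eq (pt 0 1 0) (pt 0 r2 R2)
         & ~ proj_eq (pt 0 r1 R1) (pt 0 r2 R2)]
     & forall x : 'I_3 -> R[i], nonzero3 x -> x i0 = 0 ->
         (V x <-> [\/ proj_eq (pt 0 1 0) x, proj_eq (pt 0 r1 R1) x
                    | proj_eq (pt 0 r2 R2) x])],
   (* (ii) V ∩ H_1 *)
   [/\ [/\ s1 != 0, S1 != 0, s2 != 0 & S2 != 0],
       A4 * S1 ^+ 2 + 2%:R * v22 * s1 * S1 - A3 * s1 ^+ 2 = 0,
       A4 * S2 ^+ 2 + 2%:R * v22 * s2 * S2 - A3 * s2 ^+ 2 = 0,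
       [/\ ~ proj_eq (pt 1 0 0) (pt s1 0 S1), ~ proj_eq (pt 1 0 0) (pt s2 0 S2)
         & ~ proj_eq (pt s1 0 S1) (pt s2 0 S2)]
     & forall x : 'I_3 -> R[i], nonzero3 x -> x i1 = 0 ->
         (V x <-> [\/ proj_eq (pt 1 0 0) x, proj_eq (pt s1 0 S1) x
                    | proj_eq (pt s2 0 S2) x])],
   (* (iii) V ∩ H_2 *)
   (forall x : 'I_3 -> R[i], nonzero3 x -> x i2 = 0 ->
      (V x <-> proj_eq (pt 1 0 0) x \/ proj_eq (pt 0 1 0) x))
   &
   (* (iv) smoothness *)
   [/\ smooth_pt v11 v12 v21 v22 d (pt 0 r1 R1),
       smooth_pt v11 v12 v21 v22 d (pt 0 r2 R2),
       smooth_pt v11 v12 v21 v22 d (pt s1 0 S1)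
     & smooth_pt v11 v12 v21 v22 d (pt s2 0 S2)]].
Proof.
move=> A1 A2 A3 A4 V h1 h2 h3 h4 hK hL.
subst A1 A2 A3 A4 V.
set b1 := a1 v11 v12 v21 v22 d in h1 *.
set b2 := a2 v11 v12 v21 v22 d in h2 hK *.
set b3 := a3 v11 v12 v21 v22 d in h3 hL *.
set b4 := a4 v11 v12 v21 v22 d in h4 hK hL *.
have [R1 [R2 [nR1 nR2 nR12 fac0 sm0]]] := quad h4 h2 hK.
have hL' : (- v22) ^+ 2 + b3 * b4 != 0 by rewrite sqrrN.
have [S1 [S2 [nS1 nS2 nS12 fac1 sm1]]] := quad h4 h3 hL'.
have o1 : (1 : R[i]) != 0 := oner_neq0 _.
have q0 : forall X, X \in [:: R1; R2] -> b4 * X^+2 - 2 * v12 * X - b2 = 0.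
  move=> X; rewrite !inE => /orP[] /eqP ->.
    by have := fac0 1 R1; rewrite !mulr1 expr1n mulr1 subrr ?mulr0 ?mul0r ?mulr0 => <-.
  by have := fac0 1 R2; rewrite !mulr1 expr1n mulr1 subrr ?mulr0 ?mul0r ?mulr0 => <-.
have q1 : forall X, X \in [:: S1; S2] -> b4 * X^+2 - 2 * (- v22) * X - b3 = 0.
  move=> X; rewrite !inE => /orP[] /eqP ->.
    by have := fac1 1 S1; rewrite !mulr1 expr1n mulr1 subrr ?mulr0 ?mul0r ?mulr0 => <-.
  by have := fac1 1 S2; rewrite !mulr1 expr1n mulr1 subrr ?mulr0 ?mul0r ?mulr0 => <-.
exists 1, R1, 1, R2, 1, S1, 1, S2.
split.
- split => //.
  + by have := q0 R1; rewrite !inE eqxx => /(_ isT) <-; ring.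
  + by have := q0 R2; rewrite !inE eqxx orbT => /(_ isT) <-; ring.
  + split.
    * by move/projE => [k _ [_ _]] /=; rewrite mulr0 => /eqP; rewrite (negbTE nR1).
    * by move/projE => [k _ [_ _]] /=; rewrite mulr0 => /eqP; rewrite (negbTE nR2).
    * move/projE => [k _ [_ /=]]; rewrite mulr1 => <-; rewrite mul1r => /eqP.
      by rewrite eq_sym (negbTE nR12).
  + move=> x nx x0.
    rewrite onVE x0.
    have -> : b4 * x i2 ^+ 4 + 2 * (v22 * 0 - v12 * x i1) * x i2 ^+ 3 -
      (b3 * 0 ^+ 2 + b2 * x i1 ^+ 2) * x i2 ^+ 2 + 2 * 0 * x i1 * (v22 * x i1 - v12 * 0) * x i2 +
      b1 * 0 ^+ 2 * x i1 ^+ 2 = x i2 ^+ 2 * (b4 * x i2^+2 - 2 * v12 * x i1 * x i2 - b2 * x i1^+2) by ring.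
    rewrite fac0.
    split.
    * move/eqP; rewrite !mulf_eq0 /= (negbTE h4) /= !subr_eq0 orbb.
      case/nz3E: nx; first by rewrite x0 eqxx.
        move=> ny; case/or3P => /eqP e.
        - by apply: Or31; apply/projE; exists (x i1) => //; split; rewrite ?x0 ?e; ring.
        - by apply: Or32; apply/projE; exists (x i1) => //; split; rewrite ?x0 ?e; ring.
        - by apply: Or33; apply/projE; exists (x i1) => //; split; rewrite ?x0 ?e; ring.
      move=> nz; case/or3P => /eqP e.
      - by move: nz; rewrite e eqxx.
      - have ny : x i1 != 0 by apply/eqP => h; move: nz; rewrite e h mulr0 eqxx.
        by apply: Or32; apply/projE; exists (x i1) => //; split; rewrite ?x0 ?e; ring.
      - have ny : x i1 != 0 by apply/eqP => h; move: nz; rewrite e h mulr0 eqxx.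
        by apply: Or33; apply/projE; exists (x i1) => //; split; rewrite ?x0 ?e; ring.
    * by case=> /projE [k _ [_ -> ->]] /=; ring.
- split => //.
  + by have := q1 S1; rewrite !inE eqxx => /(_ isT) <-; ring.
  + by have := q1 S2; rewrite !inE eqxx orbT => /(_ isT) <-; ring.
  + split.
    * by move/projE => [k _ [_ _]] /=; rewrite mulr0 => /eqP; rewrite (negbTE nS1).
    * by move/projE => [k _ [_ _]] /=; rewrite mulr0 => /eqP; rewrite (negbTE nS2).
    * move/projE => [k _ [/=]]; rewrite mulr1 => <- _; rewrite mul1r => /eqP.
      by rewrite eq_sym (negbTE nS12).
  + move=> x nx x1.
    rewrite onVE x1.
    have -> : b4 * x i2 ^+ 4 + 2 * (v22 * x i0 - v12 * 0) * x i2 ^+ 3 -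
      (b3 * x i0 ^+ 2 + b2 * 0 ^+ 2) * x i2 ^+ 2 + 2 * x i0 * 0 * (v22 * 0 - v12 * x i0) * x i2 +
      b1 * x i0 ^+ 2 * 0 ^+ 2 = x i2 ^+ 2 * (b4 * x i2^+2 - 2 * (- v22) * x i0 * x i2 - b3 * x i0^+2) by ring.
    rewrite fac1.
    split.
    * move/eqP; rewrite !mulf_eq0 /= (negbTE h4) /= !subr_eq0 orbb => X.
      case/nz3E: nx => [ny|ny|nz]; last first.
      - case/or3P: (X) => /eqP e.
        + by move: nz; rewrite e eqxx.
        + have ny : x i0 != 0 by apply/eqP => h; move: nz; rewrite e h mulr0 eqxx.
          by apply: Or32; apply/projE; exists (x i0) => //; split; rewrite ?x1 ?e; ring.
        + have ny : x i0 != 0 by apply/eqP => h; move: nz; rewrite e h mulr0 eqxx.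
          by apply: Or33; apply/projE; exists (x i0) => //; split; rewrite ?x1 ?e; ring.
      - by move: ny; rewrite x1 eqxx.
      - case/or3P: (X) => /eqP e.
        + by apply: Or31; apply/projE; exists (x i0) => //; split; rewrite ?x1 ?e; ring.
        + by apply: Or32; apply/projE; exists (x i0) => //; split; rewrite ?x1 ?e; ring.
        + by apply: Or33; apply/projE; exists (x i0) => //; split; rewrite ?x1 ?e; ring.
    * by case=> /projE [k _ [-> _ ->]] /=; ring.
- move=> x nx x2.
  rewrite onVE x2.
  have -> : b4 * 0 ^+ 4 + 2 * (v22 * x i0 - v12 * x i1) * 0 ^+ 3 -
      (b3 * x i0 ^+ 2 + b2 * x i1 ^+ 2) * 0 ^+ 2 + 2 * x i0 * x i1 * (v22 * x i1 - v12 * x i0) * 0 +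
      b1 * x i0 ^+ 2 * x i1 ^+ 2 = b1 * x i0 ^+ 2 * x i1 ^+ 2 by ring.
  split.
  + move/eqP; rewrite !mulf_eq0 /= (negbTE h1) /= !orbb.
    case/nz3E: nx; last by rewrite x2 eqxx.
    * move=> n0; case/orP => /eqP e; first by move: n0; rewrite e eqxx.
      by left; apply/projE; exists (x i0) => //; split; rewrite ?x2 ?e; ring.
    * move=> n1; case/orP => /eqP e; last by move: n1; rewrite e eqxx.
      by right; apply/projE; exists (x i1) => //; split; rewrite ?x2 ?e; ring.
  + by case=> /projE [k _ [-> -> _]] /=; ring.
- split; apply: smooth2; rewrite D2at /=.
  + have /q0 hq : R1 \in [:: R1; R2] by rewrite !inE eqxx.
    have := sm0 R1 hq nR1.
    by apply: contra_neq => h; apply: etrans h; rewrite /b2 /b3 /b4; ring.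
  + have /q0 hq : R2 \in [:: R1; R2] by rewrite !inE eqxx orbT.
    have := sm0 R2 hq nR2.
    by apply: contra_neq => h; apply: etrans h; rewrite /b2 /b3 /b4; ring.
  + have /q1 hq : S1 \in [:: S1; S2] by rewrite !inE eqxx.
    have := sm1 S1 hq nS1.
    by apply: contra_neq => h; apply: etrans h; rewrite /b2 /b3 /b4; ring.
  + have /q1 hq : S2 \in [:: S1; S2] by rewrite !inE eqxx orbT.
    have := sm1 S2 hq nS2.
    by apply: contra_neq => h; apply: etrans h; rewrite /b2 /b3 /b4; ring.
Qed.
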